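(* Let $K_1$ and $K_2$ be oriented Legendrian knots of the same topological knot type with $tb(K_1)=tb(K_2)$ and $rot(K_1)=rot(K_2)$. Then for every finite permutation GL-rack $(X,\ast,u,d)$, $\operatorname{Col}_X(K_1)=\operatorname{Col}_X(K_2)$.
   Context: A rack is a set $X$ with a binary operation $\ast$ such that for every $y\in X$ the map $x\mapsto x\ast y$ is a bijection of $X$ and $(x\ast y)\ast z=(x\ast z)\ast(y\ast z)$ for all $x,y,z$. A GL-rack is a quadruple $(X,\ast,u,d)$ where $(X,\ast)$ is a rack and $u,d\colon X\to X$ are maps such that for all $x,y\in X$: $u(d(x\ast x))=d(u(x\ast x))=x$; $u(x\ast y)=u(x)\ast y$ and $d(x\ast y)=d(x)\ast y$; $x\ast u(y)=x\ast d(y)=x\ast y$. A permutation GL-rack is a GL-rack with $X$ finite and $x\ast y=\sigma(x)$ for all $x,y$, for a permutation $\sigma$ of $X$, with $u\circ d=\sigma^{-1}$. Legendrian knots lie in $(\mathbb{R}^3,\xi_{\mathrm{std}})$, $\xi_{\mathrm{std}}=\mathrm{span}\{\partial_y,\partial_x+y\partial_z\}$, and are represented by oriented front diagrams (projection to the $(x,z)$-plane). For a front diagram $D$ of $K$ with writhe $w(D)$, $u(D)$ cusps traversed upward and $d(D)$ cusps traversed downward, $tb(K)=w(D)-\frac12(u(D)+d(D))$ and $rot(K)=\frac12(d(D)-u(D))$. Given a finite GL-rack $X$, a coloring of $D$ is an assignment of elements of $X$ to the semi-arcs of $D$ (segments bounded by undercrossings or cusps) such that, following the orientation through a cusp, the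 color changes from $x$ to $u(x)$ if the cusp is traversed upward and to $d(x)$ if traversed downward; and at each crossing whose over-strand is colored $y$, if the under semi-arc on the right of the oriented over-strand is colored $x$, the one on its left is colored $x\ast y$. $\operatorname{Col}_X(K)$ is the number of colorings; it is a Legendrian isotopy invariant, equal to $|\operatorname{Hom}(\operatorname{GLR}(K),X)|$ for the fundamental GL-rack $\operatorname{GLR}(K)$. *)

(* Defs.v *)
From Stdlib Require Import Relations.
From HB Require Import structures.
From mathcomp Require Import all_boot all_order all_algebra all_fingroup.
Set Implicit Arguments. Unset Strict Implicit. Unset Printing Implicit Defensive.
Import Order.TTheory GRing.Theory Num.Theory.

Definition is_rack (X : Type) (op : X -> X -> X) : Prop :=
  (forall y, bijective (fun x => op x y)) /\
  (forall x y z, op (op x y) z = op (op x z) (op y z)).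

Definition is_GLrack (X : Type) (op : X -> X -> X) (u d : X -> X) : Prop :=
  [/\ is_rack op,
      (forall x, u (d (op x x)) = x /\ d (u (op x x)) = x),
      (forall x y, u (op x y) = op (u x) y /\ d (op x y) = op (d x) y) &
      (forall x y, op x (u y) = op x y /\ op x (d y) = op x y)].

Definition is_perm_GLrack (X : finType) (sigma : {perm X}) (u d : X -> X) : Prop :=
  is_GLrack (fun x _ => sigma x) u d /\ (forall x, u (d x) = (sigma^-1)%g x).

(* Front diagrams as words of elementary events, read left to right.   *)
(* Strands at a given x are numbered 0,1,.. from bottom (lowest z).    *)
(*  LC i : left cusp, new strands at positions i (lower), i+1 (upper); *)
(*         old strands p >= i move to p+2.                             *)
(*  RC i : right cusp joining strands i, i+1; old p >= i+2 move to p-2.*)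
(*  CR i : strands i and i+1 cross; in a front the strand of smaller   *)
(*         slope (the one going from i+1 down to i) is the over-strand.*)

Inductive FEv := LC of nat | RC of nat | CR of nat.

Definition st_step (n : nat) (e : FEv) : nat :=
  match e with LC _ => n.+2 | RC _ => n - 2 | CR _ => n end.

Definition st (w : seq FEv) (k : nat) : nat := foldl st_step 0 (take k w).

Definition ev (w : seq FEv) (k : nat) : FEv := nth (CR 0) w k.

Definition ev_ok (n : nat) (e : FEv) : bool :=
  match e with LC i => i <= n | RC i => i.+1 < n | CR i => i.+1 < n end.

Definition valid_word (w : seq FEv) : bool :=
  [&& 0 < size w, st w (size w) == 0 &
      all (fun k => ev_ok (st w k) (ev w k)) (iota 0 (size w))].

Definition pass (e : FEv) (p : nat) : option nat :=
  match e with
  | LC i => Some (if p < i then p else p.+2)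
  | RC i => if p < i then Some p else if p < i.+2 then None else Some (p - 2)
  | CR i => Some (if p == i then i.+1 else if p == i.+1 then i else p)
  end.

(* segments: strand p in the region between event k and event k+1 *)
Definition Seg (w : seq FEv) :=
  {kp : 'I_(size w).+1 * 'I_((size w).*2.+1) | kp.2 < st w kp.1}.

Section Front.
Variable w : seq FEv.

Definition sk (s : Seg w) : nat := (sval s).1.
Definition sp (s : Seg w) : nat := (sval s).2.

Definition cont (s t : Seg w) : bool :=
  (sk t == (sk s).+1) && (pass (ev w (sk s)) (sp s) == Some (sp t)).

(* s enters a crossing as the under-strand (going from i to i+1) *)
Definition is_under (s : Seg w) : bool :=
  if ev w (sk s) is CR i then sp s == i else false.

Definition lcusp (s t : Seg w) : bool :=
  [&& 0 < sk s, sk t == sk s, sp t == (sp s).+1 &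
      if ev w (sk s).-1 is LC i then sp s == i else false].

Definition rcusp (s t : Seg w) : bool :=
  [&& sk t == sk s, sp t == (sp s).+1 &
      if ev w (sk s) is RC i then sp s == i else false].

(* orientation: o s = true iff s is traversed left-to-right *)
Definition orient_ok (o : {ffun Seg w -> bool}) : bool :=
  [forall s, forall t,
     (cont s t ==> (o t == o s)) && ((lcusp s t || rcusp s t) ==> (o t != o s))].

Definition join (s t : Seg w) : bool := [|| cont s t, lcusp s t | rcusp s t].
Definition sjoin : rel (Seg w) := fun s t => join s t || join t s.

Definition connected : bool := [forall s, forall t, connect sjoin s t].

Section Oriented.
Variable o : {ffun Seg w -> bool}.

Definition lookdir (k p : nat) : bool :=
  [exists s : Seg w, [&& sk s == k, sp s == p & o s]].

Section Col.
Variables (X : finType) (op : X -> X -> X) (u d : X -> X).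

Definition coloringb (c : {ffun Seg w -> X}) : bool :=
  [&& [forall s, forall t, (cont s t && ~~ is_under s) ==> (c t == c s)],
      [forall s, forall s', forall t,
         [&& cont s t, is_under s, sk s' == sk s & sp s' == (sp s).+1] ==>
         (* s' is the incoming over-strand, colored y = c s';
            left of oriented over-strand gets x * y *)
         (if o s' then c t == op (c s) (c s') else c s == op (c t) (c s'))],
      [forall s, forall t, lcusp s t ==>
         (if o s then c s == d (c t) (* traversed downward *)
          else c t == u (c s) (* traversed upward *))] &
      [forall s, forall t, rcusp s t ==>
         (if o s then c t == u (c s) (* upward *)
          else c s == d (c t) (* downward *))]].

Definition ColD : nat := #|[pred c : {ffun Seg w -> X} | coloringb c]|.
End Col.

(* writhe: a front crossing is positive iff both strands point the same
   horizontal direction *)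
Definition writhe : int :=
  (\sum_(s : Seg w | is_under s)
     (if o s == lookdir (sk s) (sp s).+1 then 1 else -1))%R.

Definition up_cusps : nat :=
  #|[pred s | [exists t, lcusp s t] && ~~ o s]| +
  #|[pred s | [exists t, rcusp s t] && o s]|.
Definition down_cusps : nat :=
  #|[pred s | [exists t, lcusp s t] && o s]| +
  #|[pred s | [exists t, rcusp s t] && ~~ o s]|.

Definition tbD : rat := (writhe%:~R - (up_cusps + down_cusps)%:R / 2)%R.
Definition rotD : rat := (((down_cusps : int) - (up_cusps : int))%:~R / 2)%R.

(* Polygonal lift to R^3 (y = dz/dx of the PL front, connected by      *)
(* segments parallel to the y-axis), oriented.                         *)
Definition pt3 := 'rV[rat]_3.
Definition P3 (x y z : rat) : pt3 := (\row_(j < 3) nth 0 [:: x; y; z] j)%R.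
Definition Nq (n : nat) : rat := n%:R.
Definition orientE (b : bool) (e : pt3 * pt3) := if b then e else (e.2, e.1).

Definition horiz (k : nat) : seq (pt3 * pt3) :=
  [seq orientE (lookdir k p) (P3 (Nq k.*2) 0 (Nq p), P3 (Nq k.*2.+1) 0 (Nq p))
  | p <- iota 0 (st w k)].

Definition strandE (x0 : rat) (p q : nat) (b : bool) : seq (pt3 * pt3) :=
  let s := (Nq q - Nq p)%R in
  [seq orientE b e | e <- [:: (P3 x0 0 (Nq p), P3 x0 s (Nq p));
                             (P3 x0 s (Nq p), P3 (x0 + 1) s (Nq q));
                             (P3 (x0 + 1) s (Nq q), P3 (x0 + 1) 0 (Nq q))]
                   & e.1 != e.2].

Definition slab (k : nat) : seq (pt3 * pt3) :=
  let x0 := Nq k.*2.+1 in let x1 := (x0 + 1)%R in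
  flatten [seq (if pass (ev w k) p is Some q then strandE x0 p q (lookdir k p)
                else [::]) | p <- iota 0 (st w k)] ++
  match ev w k with
  | LC i => let c := (Nq i - 1/2)%R in
     [seq orientE (lookdir k.+1 i) e
     | e <- [:: (P3 x0 (1/2) c, P3 x1 (1/2) (Nq i));
                (P3 x1 (1/2) (Nq i), P3 x1 0 (Nq i));
                (P3 x0 (3/2) c, P3 x0 (1/2) c)]] ++
     [seq orientE (lookdir k.+1 i.+1) e
     | e <- [:: (P3 x0 (3/2) c, P3 x1 (3/2) (Nq i.+1));
                (P3 x1 (3/2) (Nq i.+1), P3 x1 0 (Nq i.+1))]]
  | RC i => let c := (Nq i - 1/2)%R in
     [seq orientE (lookdir k i) e
     | e <- [:: (P3 x0 0 (Nq i), P3 x0 (-(1/2)) (Nq i));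
                (P3 x0 (-(1/2)) (Nq i), P3 x1 (-(1/2)) c);
                (P3 x1 (-(1/2)) c, P3 x1 (-(3/2)) c)]] ++
     [seq orientE (lookdir k i.+1) e
     | e <- [:: (P3 x0 0 (Nq i.+1), P3 x0 (-(3/2)) (Nq i.+1));
                (P3 x0 (-(3/2)) (Nq i.+1), P3 x1 (-(3/2)) c)]]
  | CR _ => [::]
  end.

Definition lift : seq (pt3 * pt3) :=
  flatten [seq horiz k | k <- iota 0 (size w).+1] ++
  flatten [seq slab k | k <- iota 0 (size w)].

End Oriented.
End Front.

Record LegKnot := {
  lk_w : seq FEv;
  lk_o : {ffun Seg lk_w -> bool};
  lk_valid : valid_word lk_w;
  lk_orient : orient_ok lk_o;
  lk_conn : connected lk_w }.

Definition tb_of (K : LegKnot) : rat := tbD (lk_o K).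
Definition rot_of (K : LegKnot) : rat := rotD (lk_o K).
Definition Col (X : finType) (op : X -> X -> X) (u d : X -> X) (K : LegKnot) : nat :=
  ColD (lk_o K) op u d.

(* Topological knot type: oriented polygonal knots (lists of directed  *)
(* edges) up to Delta-moves (Reidemeister/Alexander-Briggs).           *)
Definition in_seg (a b p : pt3) : Prop :=
  exists t : rat, [/\ (0 <= t)%R, (t <= 1)%R & p = ((1 - t) *: a + t *: b)%R].

Definition in_tri (a b c p : pt3) : Prop :=
  exists s t : rat, [/\ (0 <= s)%R, (0 <= t)%R, (s + t <= 1)%R &
                      p = (a + s *: (b - a) + t *: (c - a))%R].

Definition on_pl (K : seq (pt3 * pt3)) (p : pt3) : Prop :=
  exists2 e, e \in K & in_seg e.1 e.2 p.

Definition tri_move (K K' : seq (pt3 * pt3)) : Prop :=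
  exists a b c rest,
    [/\ perm_eq K ((a, b) :: rest),
        perm_eq K' ((a, c) :: (c, b) :: rest),
        \rank (col_mx (b - a)%R (c - a)%R) = 2 &
        forall p, in_tri a b c p -> on_pl K p -> in_seg a b p].

Definition PL_step (K K' : seq (pt3 * pt3)) : Prop := perm_eq K K' \/ tri_move K K'.
Definition PL_equiv := clos_refl_sym_trans _ PL_step.

Definition same_knot_type (K1 K2 : LegKnot) : Prop :=
  PL_equiv (lift (lk_o K1)) (lift (lk_o K2)).

(* Main.v *)
Require Import Defs.
From mathcomp Require Import all_boot all_order all_algebra all_fingroup.
From mathcomp Require Import zify.
Set Implicit Arguments. Unset Strict Implicit. Unset Printing Implicit Defensive.

Lemma iter_comm (X : Type) (f g : X -> X) :
  (forall x, f (g x) = g (f x)) -> forall m n x, iter m f (iter n g x) = iter n g (iter m f x).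
Proof.
move=> H; elim=> [|m IH] n x /=; first by [].
rewrite IH; elim: n x {IH} => [|n IH] x //=.
by rewrite H IH.
Qed.

Section Cycle.
Variables (V X : finType) (f : V -> V) (F : nat -> nat -> X -> X) (a b : V -> nat) (s0 : V).
Hypotheses (finj : injective f) (fall : forall t, fconnect f s0 t)
  (F0 : forall x, F 0 0 x = x)
  (FD : forall m n m' n' x, F (m + m') (n + n') x = F m n (F m' n' x)).

Let N := fingraph.order f s0.
Let A k := \sum_(i < k) a (iter i f s0).
Let B k := \sum_(i < k) b (iter i f s0).

Lemma col_iter (c : {ffun V -> X}) :
  (forall s, c (f s) = F (a s) (b s) (c s)) ->
  forall k, c (iter k f s0) = F (A k) (B k) (c s0).
Proof.
move=> Hc; elim=> [|k IH]; first by rewrite /A /B !big_ord0 F0.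
rewrite /A /B !big_ord_recr /= Hc IH -FD.
by rewrite [X in F X _]addnC [X in F _ X]addnC.
Qed.

Lemma sum_orbit (h : V -> nat) : \sum_(i < N) h (iter i f s0) = \sum_s h s.
Proof.
have -> : \sum_(i < N) h (iter i f s0) = \sum_(t <- fingraph.orbit f s0) h t.
  rewrite /fingraph.orbit -/N.
  elim: N s0 => [|n IH] x; first by rewrite big_ord0 big_nil.
  by rewrite big_ord_recl big_cons /=; congr (_ + _); rewrite -IH; apply: eq_bigr => i _; rewrite -iterSr.
rewrite -big_enum; apply: perm_big; apply: uniq_perm.
- exact: orbit_uniq.
- exact: enum_uniq.
by move=> t; rewrite mem_enum -fconnect_orbit fall.
Qed.

Lemma cycle_count :
  #|[pred c : {ffun V -> X} | [forall s, c (f s) == F (a s) (b s) (c s)]]| =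
  #|[pred x | F (\sum_s a s) (\sum_s b s) x == x]|.
Proof.
set P := [pred c : {ffun V -> X} | _].
have Pc : forall c, c \in P -> forall s, c (f s) = F (a s) (b s) (c s).
  by move=> c /forallP H s; apply/eqP/H.
rewrite -(@card_in_imset _ _ (fun c : {ffun V -> X} => c s0) P).
  apply: eq_card => x; rewrite inE /=; apply/imsetP/idP.
    case=> c cP ->; have := col_iter (Pc c cP) N.
    by rewrite iter_order // /A /B !sum_orbit => <-.
  move/eqP => Hx.
  exists [ffun t => F (A (findex f s0 t)) (B (findex f s0 t)) x]; last first.
    by rewrite ffunE findex0 /A /B !big_ord0 F0.
  rewrite inE; apply/forallP => t; rewrite !ffunE; apply/eqP.
  have ht := findex_max (fall t); have it := iter_findex (fall t).
  set i := findex f s0 t in ht it *.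
  have [lt|eq] := ltnP i.+1 N.
    have -> : findex f s0 (f t) = i.+1 by rewrite -it -iterS findex_iter.
    rewrite /A /B !big_ord_recr /= it -FD.
    by rewrite [X in F X _]addnC [X in F _ X]addnC.
  have eN : i.+1 = N by apply/eqP; rewrite eqn_leq ht.
  have -> : f t = s0 by rewrite -it -iterS eN iter_order.
  rewrite findex0 /A /B !big_ord0 F0 -FD.
  have := sum_orbit a; have := sum_orbit b; rewrite -/N -eN !big_ord_recr /= it.
  by move=> Eb Ea; rewrite addnC Ea [X in F _ X]addnC Eb Hx.
move=> c1 c2 P1 P2 /= E; apply/ffunP => t.
have it := iter_findex (fall t).
by rewrite -it !col_iter ?E //; apply: Pc.
Qed.
End Cycle.

Section Struct.
Variable w : seq FEv.
Hypothesis Hv : valid_word w.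

Lemma stS k : k < size w -> st w k.+1 = st_step (st w k) (ev w k).
Proof. by move=> hk; rewrite /st (take_nth (CR 0)) // foldl_rcons. Qed.

Lemma evok k : k < size w -> ev_ok (st w k) (ev w k).
Proof. by move=> hk; case/and3P: Hv => _ _ /allP; apply; rewrite mem_iota. Qed.

Lemma st_end k : size w <= k -> st w k = 0.
Proof.
move=> hk; case/and3P: Hv => _ /eqP + _.
by rewrite /st take_size take_oversize.
Qed.

Lemma st_le k : st w k <= k.*2.
Proof.
elim: k => [|k IH]; first by rewrite /st take0.
case: (ltnP k (size w)) => hk; last by rewrite st_end //; apply: leqW.
rewrite stS //; case: (ev w k) => i /=; lia.
Qed.

Lemma sp_lt (s : Seg w) : sp s < st w (sk s).
Proof. exact: (valP s). Qed.

Lemma sk_lt (s : Seg w) : sk s < size w.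
Proof.
have h1 : sk s < (size w).+1 by exact: ltn_ord.
have h2 := sp_lt s.
case: (ltnP (sk s) (size w)) => // h3.
by rewrite st_end in h2.
Qed.

Lemma seg_ex k p : k <= size w -> p < st w k -> exists t : Seg w, sk t = k /\ sp t = p.
Proof.
move=> hk hp.
have hk' : k < (size w).+1 by [].
have hp' : p < (size w).*2.+1.
  have := st_le k; lia.
by exists (@Sub _ _ (Seg w) (Ordinal hk', Ordinal hp') hp).
Qed.

Lemma seg_eq (s t : Seg w) : sk s = sk t -> sp s = sp t -> s = t.
Proof.
case: s t => [[k p] hs] [[k' p'] ht]; rewrite /sk /sp /= => ek ep.
by apply: val_inj => /=; congr pair; apply: val_inj.
Qed.

Lemma pass_inj e p p' q : pass e p = Some q -> pass e p' = Some q -> p = p'.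
Proof.
case: e => i /=; do ! case: ifP => /= ?; move=> h1 h2; (try discriminate);
move: h1 h2 => /(congr1 (odflt 0)) /= h1 /(congr1 (odflt 0)) /= h2; lia.
Qed.


Lemma swapK i p : (if (if p == i then i.+1 else if p == i.+1 then i else p) == i then i.+1
  else if (if p == i then i.+1 else if p == i.+1 then i else p) == i.+1 then i
  else (if p == i then i.+1 else if p == i.+1 then i else p)) = p.
Proof.
have ne : (i.+1 == i) = false by rewrite (gtn_eqF (ltnSn i)).
case: (eqVneq p i) => [->|h1]; first by rewrite /= ne eqxx.
case: (eqVneq p i.+1) => [->|h2]; first by rewrite /= eqxx.
by rewrite /= (negbTE h1) (negbTE h2).
Qed.

Lemma fwd_ex (s : Seg w) :
  (exists t, cont s t) \/ (exists t, rcusp s t || rcusp t s).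
Proof.
have hk := sk_lt s; have hp := sp_lt s; have ok := evok hk; have hst := stS hk.
rewrite /cont /rcusp.
case E: (ev w (sk s)) => [i|i|i]; rewrite E /= in ok hst *.
- left; have [t [tk tp]] := @seg_ex (sk s).+1 (if sp s < i then sp s else (sp s).+2) hk
    ltac:(rewrite hst; case: ifP; lia).
  by exists t; rewrite tk tp !eqxx.
- case: (ltnP (sp s) i) => h1.
    left; have [t [tk tp]] := @seg_ex (sk s).+1 (sp s) hk ltac:(rewrite hst; lia).
    by exists t; rewrite tk tp !eqxx.
  case: (ltnP (sp s) i.+2) => h2.
    right; case: (eqVneq (sp s) i) => h3.
      have [t [tk tp]] := @seg_ex (sk s) i.+1 (ltnW hk) ltac:(lia).
      by exists t; rewrite tk tp h3 E !eqxx.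
    have [t [tk tp]] := @seg_ex (sk s) i (ltnW hk) ltac:(lia).
    by exists t; rewrite tk tp E !eqxx /= andbF andbT; apply/eqP; lia.
  left; have [t [tk tp]] := @seg_ex (sk s).+1 (sp s - 2) hk ltac:(rewrite hst; lia).
  by exists t; rewrite tk tp !eqxx.
- left; set q := (if sp s == i then i.+1 else if sp s == i.+1 then i else sp s).
  have hq : q < st w (sk s).+1.
    rewrite hst /q; case: eqP => ?; [|case: eqP => ?]; lia.
  have [t [tk tp]] := @seg_ex (sk s).+1 q hk hq.
  by exists t; rewrite tk tp !eqxx.
Qed.

Lemma bwd_ex (t : Seg w) :
  (exists s, cont s t) \/ (exists s, lcusp t s || lcusp s t).
Proof.
have hp := sp_lt t; have hk := sk_lt t.
case E0: (sk t) => [|j]; first by rewrite E0 /st take0 in hp.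
have hj : j < size w by lia.
have ok := evok hj; have hst := stS hj.
rewrite /cont /lcusp E0 /=.
rewrite E0 hst in hp.
case E: (ev w j) => [i|i|i]; rewrite E /= in ok hp *.
- case: (ltnP (sp t) i) => h1.
    left; have [s [sk' sp']] := @seg_ex j (sp t) (ltnW hj) ltac:(lia).
    by exists s; rewrite sk' sp' E /= h1 !eqxx.
  case: (ltnP (sp t) i.+2) => h2.
    right; case: (eqVneq (sp t) i) => h3.
      have [s [sk' sp']] := @seg_ex j.+1 i.+1 hj ltac:(rewrite hst E /=; lia).
      by exists s; rewrite sk' sp' h3 E !eqxx.
    have [s [sk' sp']] := @seg_ex j.+1 i hj ltac:(rewrite hst E /=; lia).
    by exists s; rewrite sk' sp' E !eqxx /= andbF andbT; apply/eqP; lia.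
  left; have [s [sk' sp']] := @seg_ex j (sp t - 2) (ltnW hj) ltac:(lia).
  exists s; rewrite sk' sp' E /= !eqxx /=.
  have -> : (sp t - 2 < i) = false by lia.
  by apply/eqP; congr Some; lia.
- case: (ltnP (sp t) i) => h1.
    left; have [s [sk' sp']] := @seg_ex j (sp t) (ltnW hj) ltac:(lia).
    by exists s; rewrite sk' sp' E /= h1 !eqxx.
  left; have [s [sk' sp']] := @seg_ex j (sp t).+2 (ltnW hj) ltac:(lia).
  exists s; rewrite sk' sp' E /= !eqxx /=.
  have -> : ((sp t).+2 < i) = false by lia.
  have -> : ((sp t).+2 < i.+2) = false by lia.
  by apply/eqP; congr Some; lia.
- left; set q := (if sp t == i then i.+1 else if sp t == i.+1 then i else sp t).
  have hq : q < st w j by rewrite /q; case: eqP => ?; [|case: eqP => ?]; lia.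
  have [s [sk' sp']] := @seg_ex j q (ltnW hj) hq.
  exists s; rewrite sk' sp' E /= !eqxx /=.
  by apply/eqP; congr Some; rewrite /q swapK.
Qed.

Lemma cont_fun (s t t' : Seg w) : cont s t -> cont s t' -> t = t'.
Proof.
rewrite /cont => /andP[/eqP k1 /eqP p1] /andP[/eqP k2 /eqP p2].
apply: seg_eq; first by rewrite k1 k2.
by move: p1; rewrite p2 => -[].
Qed.

Lemma cont_inj (s s' t : Seg w) : cont s t -> cont s' t -> s = s'.
Proof.
rewrite /cont => /andP[/eqP k1 /eqP p1] /andP[/eqP k2 /eqP p2].
have ek : sk s = sk s' by move: k1; rewrite k2 => -[].
apply: seg_eq => //; apply: (pass_inj p1); by rewrite ek.
Qed.

Lemma cont_rc1 (s t t' : Seg w) : cont s t -> rcusp s t' -> False.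
Proof.
rewrite /cont /rcusp => /andP[_ /eqP] + /and3P[_ _].
case: (ev w (sk s)) => // i /= + /eqP ei; rewrite ei ltnn ltnS leqnSn //.
Qed.

Lemma cont_rc2 (s t t' : Seg w) : cont s t -> rcusp t' s -> False.
Proof.
rewrite /cont /rcusp => /andP[_ /eqP] + /and3P[/eqP ek /eqP ep].
rewrite ek ep; case: (ev w (sk t')) => // i /= + /eqP ei.
by rewrite ei ltnNge leqnSn /= ltnSn.
Qed.

Lemma cont_lc1 (s t t' : Seg w) : cont s t -> lcusp t t' -> False.
Proof.
rewrite /cont /lcusp => /andP[/eqP k1 /eqP] + /and4P[_ _ _].
rewrite k1 /=; case: (ev w (sk s)) => // i /= + /eqP ei.
rewrite ei; case: ifP => h [] ?; lia.
Qed.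

Lemma cont_lc2 (s t t' : Seg w) : cont s t -> lcusp t' t -> False.
Proof.
rewrite /cont /lcusp => /andP[/eqP k1 /eqP] + /and4P[_ /eqP k2 /eqP p2].
rewrite p2 -k2 k1 /=; case: (ev w (sk s)) => // i /= + /eqP ei.
rewrite ei; case: ifP => h [] ?; lia.
Qed.

Lemma rc_fun (s t t' : Seg w) : rcusp s t -> rcusp s t' -> t = t'.
Proof.
rewrite /rcusp => /and3P[/eqP k1 /eqP p1 _] /and3P[/eqP k2 /eqP p2 _].
by apply: seg_eq; congruence.
Qed.

Lemma rc_inj (s s' t : Seg w) : rcusp s t -> rcusp s' t -> s = s'.
Proof.
rewrite /rcusp => /and3P[/eqP k1 /eqP p1 _] /and3P[/eqP k2 /eqP p2 _].
by apply: seg_eq; congruence.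
Qed.

Lemma rc_rc (s t t' : Seg w) : rcusp s t -> rcusp t' s -> False.
Proof.
rewrite /rcusp => /and3P[_ _ +] /and3P[/eqP k2 /eqP p2].
rewrite k2; case: (ev w (sk t')) => // i /eqP e1 /eqP e2; lia.
Qed.

Lemma lc_fun (s t t' : Seg w) : lcusp s t -> lcusp s t' -> t = t'.
Proof.
rewrite /lcusp => /and4P[_ /eqP k1 /eqP p1 _] /and4P[_ /eqP k2 /eqP p2 _].
by apply: seg_eq; congruence.
Qed.

Lemma lc_inj (s s' t : Seg w) : lcusp s t -> lcusp s' t -> s = s'.
Proof.
rewrite /lcusp => /and4P[_ /eqP k1 /eqP p1 _] /and4P[_ /eqP k2 /eqP p2 _].
by apply: seg_eq; congruence.
Qed.

Lemma lc_lc (s t t' : Seg w) : lcusp s t -> lcusp t' s -> False.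
Proof.
rewrite /lcusp => /and4P[_ _ _ +] /and4P[_ /eqP k2 /eqP p2].
rewrite k2; case: (ev w (sk t').-1) => // i /eqP e1 /eqP e2; lia.
Qed.

Lemma lc_sk (s t : Seg w) : lcusp s t -> sk t = sk s.
Proof. by case/and4P => _ /eqP. Qed.

Lemma rc_sk (s t : Seg w) : rcusp s t -> sk t = sk s.
Proof. by case/and3P => /eqP. Qed.

Lemma cont_sk (s t : Seg w) : cont s t -> sk t = (sk s).+1.
Proof. by case/andP => /eqP. Qed.

Variable o : {ffun Seg w -> bool}.
Hypothesis Ho : orient_ok o.

Lemma or_cont (s t : Seg w) : cont s t -> o t = o s.
Proof.
move: Ho => /forallP /(_ s) /forallP /(_ t) /andP[h _] h1.
by apply/eqP; move: h; rewrite h1.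
Qed.

Lemma or_lc (s t : Seg w) : lcusp s t -> o t = ~~ o s.
Proof.
move: Ho => /forallP /(_ s) /forallP /(_ t) /andP[_ h] h1.
by move: h; rewrite h1 /=; case: (o s); case: (o t).
Qed.

Lemma or_rc (s t : Seg w) : rcusp s t -> o t = ~~ o s.
Proof.
move: Ho => /forallP /(_ s) /forallP /(_ t) /andP[_ h] h1.
by move: h; rewrite h1 orbT /=; case: (o s); case: (o t).
Qed.

Definition step (s t : Seg w) : bool :=
  if o s then [|| cont s t, rcusp s t | rcusp t s]
  else [|| cont t s, lcusp s t | lcusp t s].

Definition next (s : Seg w) : Seg w := odflt s [pick t | step s t].

Lemma step_ex s : exists t, step s t.
Proof.
rewrite /step; case: (o s).
  case: (fwd_ex s) => [[t h]|[t h]]; exists t; first by rewrite h.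
  by case/orP: h => ->; rewrite ?orbT.
case: (bwd_ex s) => [[t h]|[t h]]; exists t; first by rewrite h.
by case/orP: h => ->; rewrite ?orbT.
Qed.

Lemma step_fun s t t' : step s t -> step s t' -> t = t'.
Proof.
rewrite /step; case: (o s) => /or3P[h|h|h] /or3P[h'|h'|h'].
all: first [ exact: (cont_fun h h') | exact: (cont_inj h h')
           | exact: (rc_fun h h') | exact: (rc_inj h h')
           | exact: (lc_fun h h') | exact: (lc_inj h h') | exfalso ].
all: first [ exact: (cont_rc1 h h') | exact: (cont_rc1 h' h)
           | exact: (cont_rc2 h h') | exact: (cont_rc2 h' h)
           | exact: (rc_rc h h') | exact: (rc_rc h' h)
           | exact: (cont_lc1 h h') | exact: (cont_lc1 h' h)
           | exact: (cont_lc2 h h') | exact: (cont_lc2 h' h)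
           | exact: (lc_lc h h') | exact: (lc_lc h' h) | idtac ].
Qed.

Lemma next_step s : step s (next s).
Proof.
rewrite /next; case: pickP => [t //|/= H].
by have [t] := step_ex s; rewrite H.
Qed.

Lemma next_eq s t : step s t -> next s = t.
Proof. exact: step_fun (next_step s). Qed.

Lemma step_pre t : exists s, step s t.
Proof.
rewrite /step; case Et: (o t).
  case: (bwd_ex t) => [[s h]|[s h]]; exists s.
    by rewrite (or_cont h) in Et; rewrite Et h.
  case/orP: h => h.
    by have := or_lc h; rewrite Et => ->; rewrite h !orbT.
  by move: (or_lc h); rewrite Et; case: (o s) => // _; rewrite h !orbT.
case: (fwd_ex t) => [[s h]|[s h]]; exists s.
  by rewrite (or_cont h) Et h.
case/orP: h => h.
  by have := or_rc h; rewrite Et => ->; rewrite h !orbT.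
by move: (or_rc h); rewrite Et; case: (o s) => // _; rewrite h !orbT.
Qed.

Lemma next_inj : injective next.
Proof.
pose prev t := odflt t [pick s | next s == t].
have K : cancel prev next.
  move=> t; rewrite /prev; case: pickP => [s /eqP //|/= H].
  by have [s /next_eq E] := step_pre t; move: (H s); rewrite E eqxx.
have [g Kg Kg'] := injF_bij (can_inj K).
have E : next =1 g by move=> x; rewrite -{1}(Kg' x) K.
by move=> x y; rewrite !E; apply: (can_inj Kg').
Qed.

Ltac solve_step E h :=
  rewrite /step; first [ rewrite (or_cont h) E | rewrite (or_lc h) E
                       | rewrite (or_rc h) E | rewrite E ]; rewrite /= h ?orbT.

Lemma join_next s t : sjoin s t -> next s = t \/ next t = s.
Proof.
rewrite /sjoin /join => /orP[] /or3P[h|h|h].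
- by case E: (o s); [left|right]; apply: next_eq; solve_step E h.
- by case E: (o s); [right|left]; apply: next_eq; solve_step E h.
- by case E: (o s); [left|right]; apply: next_eq; solve_step E h.
- by case E: (o t); [right|left]; apply: next_eq; solve_step E h.
- by case E: (o t); [left|right]; apply: next_eq; solve_step E h.
- by case E: (o t); [right|left]; apply: next_eq; solve_step E h.
Qed.

Lemma all_fconnect : connected w -> forall s t, fconnect next s t.
Proof.
move=> /forallP Hc s t; move: (Hc s) => /forallP /(_ t).
apply: connect_sub => x y /join_next [E|E].
  by apply: connect1; rewrite /= E.
rewrite (fconnect_sym next_inj).
by apply: connect1; rewrite /= E.
Qed.

Lemma cont_sk_ne (s t : Seg w) : cont s t -> sk t = sk s -> False.
Proof. by move/cont_sk => ->; lia. Qed.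

Inductive kind := KId | KSig | KSigInv | KU | KD.

Definition over_dir (s : Seg w) := lookdir o (sk s) (sp s).+1.

Definition kind_of (s : Seg w) : kind :=
  let t := next s in
  if o s then
    (if cont s t then (if is_under s then (if over_dir s then KSig else KSigInv) else KId)
     else if rcusp s t then KU else KD)
  else
    (if cont t s then (if is_under t then (if over_dir t then KSigInv else KSig) else KId)
     else if lcusp s t then KU else KD).

Lemma lookdir_seg (s' : Seg w) : lookdir o (sk s') (sp s') = o s'.
Proof.
apply/existsP/idP => [[s /and3P[/eqP k /eqP p os]]|os].
  by rewrite -(seg_eq k p).
by exists s'; rewrite !eqxx os.
Qed.

Lemma over_ex (s : Seg w) : is_under s -> exists s' : Seg w, sk s' = sk s /\ sp s' = (sp s).+1.
Proof.
rewrite /is_under; have hk := sk_lt s; have ok := evok hk.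
case E: (ev w (sk s)) => [i|i|i] //; rewrite E /= in ok => /eqP ei.
by apply: seg_ex; [exact: ltnW | rewrite ei].
Qed.

Section Colr.
Variables (X : finType) (sigma : {perm X}) (u d : X -> X).

Definition kfun (k : kind) : X -> X :=
  match k with KId => id | KSig => sigma | KSigInv => (sigma^-1)%g | KU => u | KD => d end.

Lemma col_equiv (c : {ffun Seg w -> X}) :
  coloringb o (fun x _ => sigma x) u d c = [forall s, c (next s) == kfun (kind_of s) (c s)].
Proof.
apply/idP/idP.
  case/and4P => /forallP H1 /forallP H2 /forallP H3 /forallP H4.
  apply/forallP => s; have st := next_step s.
  rewrite /kind_of; set t := next s in st *.
  case Eo: (o s); rewrite /step Eo in st.
    case Ec: (cont s t).
      case Eu: (is_under s).
        have [s' [k' p']] := over_ex Eu.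
        have od : over_dir s = o s' by rewrite /over_dir -k' -p' lookdir_seg.
        move: (H2 s) => /forallP /(_ s') /forallP /(_ t).
        rewrite Ec Eu k' p' !eqxx /= od.
        by case: (o s') => /= /eqP -> //; rewrite permK.
      by move: (H1 s) => /forallP /(_ t); rewrite Ec Eu.
    case Er: (rcusp s t).
      by move: (H3 s) (H4 s) => _ /forallP /(_ t); rewrite Er Eo.
    rewrite Ec Er /= in st.
    have ot : o t = false by move: (or_rc st); rewrite Eo; case: (o t).
    by move: (H4 t) => /forallP /(_ s); rewrite st ot.
  case Ec: (cont t s).
    have ot : o t = false by rewrite -(or_cont Ec) Eo.
    case Eu: (is_under t).
      have [s' [k' p']] := over_ex Eu.
      have od : over_dir t = o s' by rewrite /over_dir -k' -p' lookdir_seg.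
      move: (H2 t) => /forallP /(_ s') /forallP /(_ s).
      rewrite Ec Eu k' p' !eqxx /= od.
      by case: (o s') => /= /eqP -> //; rewrite permK.
    by move: (H1 t) => /forallP /(_ s); rewrite Ec Eu /= eq_sym.
  case El: (lcusp s t).
    by move: (H3 s) => /forallP /(_ t); rewrite El Eo.
  rewrite Ec El /= in st.
  have ot : o t = true by move: (or_lc st); rewrite Eo; case: (o t).
  by move: (H3 t) => /forallP /(_ s); rewrite st ot.
move/forallP => G.
have G' : forall s, c (next s) = kfun (kind_of s) (c s) by move=> s; apply/eqP/G.
apply/and4P; split.
- apply/forallP => s; apply/forallP => t; apply/implyP => /andP[hc hu].
  case Eo: (o s).
    have nx : next s = t by apply: next_eq; rewrite /step Eo hc.
    by have := G' s; rewrite /kind_of nx Eo hc (negbTE hu) /= => ->.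
  have ot : o t = false by rewrite (or_cont hc) Eo.
  have nx : next t = s by apply: next_eq; rewrite /step ot hc.
  by have := G' t; rewrite /kind_of nx ot hc (negbTE hu) /= => ->.
- apply/forallP => s; apply/forallP => s'; apply/forallP => t.
  apply/implyP => /and4P[hc hu /eqP k' /eqP p'].
  have od : over_dir s = o s' by rewrite /over_dir -k' -p' lookdir_seg.
  case Eo: (o s).
    have nx : next s = t by apply: next_eq; rewrite /step Eo hc.
    have := G' s; rewrite /kind_of nx Eo hc hu od.
    by case: (o s') => /= ->; rewrite ?permKV.
  have ot : o t = false by rewrite (or_cont hc) Eo.
  have nx : next t = s by apply: next_eq; rewrite /step ot hc.
  have := G' t; rewrite /kind_of nx ot hc hu od.
  by case: (o s') => /= ->; rewrite ?permKV.
- apply/forallP => s; apply/forallP => t; apply/implyP => hl.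
  have ek := lc_sk hl.
  case Eo: (o s).
    have ot : o t = false by rewrite (or_lc hl) Eo.
    have nx : next t = s by apply: next_eq; rewrite /step ot hl !orbT.
    have nc : cont s t = false by apply/negP => hc; apply: (cont_sk_ne hc).
    have nl : lcusp t s = false by apply/negP => h'; apply: (lc_lc hl h').
    by have := G' t; rewrite /kind_of nx ot nc nl /= => ->.
  have nx : next s = t by apply: next_eq; rewrite /step Eo hl !orbT.
  have nc : cont t s = false by apply/negP => hc; have := cont_sk hc; lia.
  by have := G' s; rewrite /kind_of nx Eo nc hl /= => ->.
- apply/forallP => s; apply/forallP => t; apply/implyP => hr.
  have ek := rc_sk hr.
  case Eo: (o s).
    have nx : next s = t by apply: next_eq; rewrite /step Eo hr !orbT.
    have nc : cont s t = false by apply/negP => hc; apply: (cont_rc1 hc hr).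
    by have := G' s; rewrite /kind_of nx Eo nc hr /= => ->.
  have ot : o t = true by rewrite (or_rc hr) Eo.
  have nx : next t = s by apply: next_eq; rewrite /step ot hr !orbT.
  have nc : cont t s = false by apply/negP => hc; have := cont_sk hc; lia.
  have nr : rcusp t s = false by apply/negP => h'; apply: (rc_rc hr h').
  by have := G' t; rewrite /kind_of nx ot nc nr /= => ->.
Qed.
End Colr.

Definition kcode (k : kind) : nat :=
  match k with KId => 0 | KSig => 1 | KSigInv => 2 | KU => 3 | KD => 4 end.

Lemma cardS (P : pred (Seg w)) : #|[pred s | P s]| = \sum_s (P s : nat).
Proof. by rewrite -sum1_card big_mkcond; apply: eq_bigr => s _ /=; rewrite inE; case: (P s). Qed.

Lemma reidx (Q : Seg w -> nat) : \sum_s Q (next s) = \sum_s Q s.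
Proof. by rewrite [RHS](reindex_inj next_inj). Qed.

Lemma rc_nunder (s t : Seg w) : rcusp s t -> ~~ is_under s && ~~ is_under t.
Proof.
case/and3P => /eqP ek _; rewrite /is_under ek.
by case: (ev w (sk s)).
Qed.

Lemma under_cont s : o s -> is_under s -> cont s (next s).
Proof.
move=> os hu; have := next_step s; rewrite /step os.
case/or3P => // h; have := rc_nunder h; rewrite hu //.
by rewrite andbC.
Qed.

Lemma cross2 (R : pred (Seg w)) s :
  (~~ o s && cont (next s) s && is_under (next s) && R (next s)) =
  (~~ o (next s) && is_under (next s) && R (next s)).
Proof.
have := next_step s; rewrite /step; set r := next s.
case Eo: (o s) => /or3P[h|h|h] /=.
- by have := or_cont h; rewrite Eo => ->.
- by have := rc_nunder h; case/andP => _ /negbTE ->; rewrite andbF.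
- by have := rc_nunder h; case/andP => /negbTE ->; rewrite andbF.
- by rewrite h -(or_cont h) Eo.
- have nc : cont r s = false by apply/negP => hc; have := cont_sk hc; have := lc_sk h; lia.
  by rewrite nc (or_lc h) Eo.
- have nc : cont r s = false by apply/negP => hc; have := cont_sk hc; have := lc_sk h; lia.
  have : o s = ~~ o r := or_lc h.
  by rewrite nc Eo; case: (o r).
Qed.

Lemma kind_sig s : (kcode (kind_of s) == 1) =
  (o s && is_under s && over_dir s) ||
  (~~ o s && cont (next s) s && is_under (next s) && ~~ over_dir (next s)).
Proof.
rewrite /kind_of; case Eo: (o s) => /=.
  case Eu: (is_under s) => /=; last by do ! case: ifP.
  by rewrite (under_cont Eo Eu) /=; case: ifP.
by rewrite ?andbT; do ! case: ifP.
Qed.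

Lemma kind_siginv s : (kcode (kind_of s) == 2) =
  (o s && is_under s && ~~ over_dir s) ||
  (~~ o s && cont (next s) s && is_under (next s) && over_dir (next s)).
Proof.
rewrite /kind_of; case Eo: (o s) => /=.
  case Eu: (is_under s) => /=; last by do ! case: ifP.
  by rewrite (under_cont Eo Eu) /=; case: ifP.
by rewrite ?andbT; do ! case: ifP.
Qed.

Lemma kind_u s : (kcode (kind_of s) == 3) =
  (o s && rcusp s (next s)) || (~~ o s && lcusp s (next s)).
Proof.
rewrite /kind_of; case Eo: (o s) => /=.
  case Ec: (cont s (next s)).
    have -> : rcusp s (next s) = false by apply/negP => h; apply: (cont_rc1 Ec h).
    by do ! case: ifP.
  by case: ifP.
case Ec: (cont (next s) s).
  have -> : lcusp s (next s) = false by apply/negP => h; apply: (cont_lc1 Ec h).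
  by do ! case: ifP.
by case: ifP.
Qed.

Lemma kind_d s : (kcode (kind_of s) == 4) =
  (o s && rcusp (next s) s) || (~~ o s && lcusp (next s) s).
Proof.
have := next_step s; rewrite /step /kind_of; set t := next s.
case Eo: (o s) => /= st.
  case Ec: (cont s t).
    have -> : rcusp t s = false by apply/negP => h; apply: (cont_rc2 Ec h).
    by do ! case: ifP.
  case Er: (rcusp s t).
    by have -> : rcusp t s = false by apply/negP => h; apply: (rc_rc Er h).
  by rewrite Ec Er /= in st; rewrite st.
case Ec: (cont t s).
  have -> : lcusp t s = false by apply/negP => h; apply: (cont_lc2 Ec h).
  by do ! case: ifP.
case El: (lcusp s t).
  by have -> : lcusp t s = false by apply/negP => h; apply: (lc_lc El h).
by rewrite Ec El /= in st; rewrite st.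
Qed.

Definition Pos := #|[pred s | is_under s && (o s == over_dir s)]|.
Definition Neg := #|[pred s | is_under s && (o s != over_dir s)]|.

Lemma card_sig : #|[pred s | kcode (kind_of s) == 1]| = Pos.
Proof.
rewrite /Pos !cardS.
under eq_bigr => s _ do rewrite kind_sig.
have E : forall s, ((o s && is_under s && over_dir s) ||
  (~~ o s && cont (next s) s && is_under (next s) && ~~ over_dir (next s)) : nat) =
  (o s && is_under s && over_dir s : nat) +
  (~~ o (next s) && is_under (next s) && ~~ over_dir (next s) : nat).
  by move=> s; rewrite -(cross2 (fun r => ~~ over_dir r)); case: (o s) => /=; rewrite ?addn0 ?add0n ?orbF.
under eq_bigr => s _ do rewrite E.
rewrite big_split /= (reidx (fun r => (~~ o r && is_under r && ~~ over_dir r : nat))).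
rewrite -big_split /=; apply: eq_bigr => s _.
by case: (o s); case: (is_under s); case: (over_dir s).
Qed.

Lemma card_siginv : #|[pred s | kcode (kind_of s) == 2]| = Neg.
Proof.
rewrite /Neg !cardS.
under eq_bigr => s _ do rewrite kind_siginv.
have E : forall s, ((o s && is_under s && ~~ over_dir s) ||
  (~~ o s && cont (next s) s && is_under (next s) && over_dir (next s)) : nat) =
  (o s && is_under s && ~~ over_dir s : nat) +
  (~~ o (next s) && is_under (next s) && over_dir (next s) : nat).
  by move=> s; rewrite -(cross2 (fun r => over_dir r)); case: (o s) => /=; rewrite ?addn0 ?add0n ?orbF.
under eq_bigr => s _ do rewrite E.
rewrite big_split /= (reidx (fun r => (~~ o r && is_under r && over_dir r : nat))).
rewrite -big_split /=; apply: eq_bigr => s _.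
by case: (o s); case: (is_under s); case: (over_dir s).
Qed.

Lemma card_u : #|[pred s | kcode (kind_of s) == 3]| = up_cusps o.
Proof.
rewrite /up_cusps !cardS -big_split /=; apply: eq_bigr => s _.
rewrite kind_u; case Eo: (o s) => /=; rewrite ?andbT ?andbF ?orbF ?addn0.
  have -> : [exists t, rcusp s t] = rcusp s (next s).
    apply/existsP/idP => [[t h]|h]; last by exists (next s).
    by rewrite (@next_eq s t) // /step Eo h orbT.
  by [].
have -> : [exists t, lcusp s t] = lcusp s (next s).
  apply/existsP/idP => [[t h]|h]; last by exists (next s).
  by rewrite (@next_eq s t) // /step Eo h orbT.
by rewrite ?addn0.
Qed.

Lemma card_d : #|[pred s | kcode (kind_of s) == 4]| = down_cusps o.
Proof.
rewrite /down_cusps !cardS.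
under eq_bigr => s _ do rewrite kind_d.
have E : forall s, ((o s && rcusp (next s) s) || (~~ o s && lcusp (next s) s) : nat) =
   (o (next s) && [exists t, lcusp (next s) t] : nat) +
   (~~ o (next s) && [exists t, rcusp (next s) t] : nat).
  move=> s; have := next_step s; rewrite /step; set r := next s.
  case Eo: (o s) => /or3P[h|h|h] /=.
  - have -> : rcusp r s = false by apply/negP => h'; apply: (cont_rc2 h h').
    have -> : [exists t, lcusp r t] = false.
      by apply/existsP => -[t h']; apply: (cont_lc1 h h').
    by rewrite (or_cont h) Eo.
  - have -> : rcusp r s = false by apply/negP => h'; apply: (rc_rc h h').
    have -> : [exists t, rcusp r t] = false.
      by apply/existsP => -[t h']; apply: (rc_rc h' h).
    by rewrite (or_rc h) Eo.
  - rewrite h; have : o s = ~~ o r := or_rc h.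
    rewrite Eo; case Er: (o r) => //= _.
    by have -> : [exists t, rcusp r t] by apply/existsP; exists s.
  - have -> : lcusp r s = false by apply/negP => h'; apply: (cont_lc2 h h').
    have -> : [exists t, rcusp r t] = false.
      by apply/existsP => -[t h']; apply: (cont_rc1 h h').
    by rewrite -(or_cont h) Eo.
  - have -> : lcusp r s = false by apply/negP => h'; apply: (lc_lc h h').
    have -> : [exists t, lcusp r t] = false.
      by apply/existsP => -[t h']; apply: (lc_lc h' h).
    by rewrite (or_lc h) Eo.
  - rewrite h; have : o s = ~~ o r := or_lc h.
    rewrite Eo; case Er: (o r) => //= _.
    by have -> : [exists t, lcusp r t] by apply/existsP; exists s.
under eq_bigr => s _ do rewrite E.
rewrite big_split /=.
rewrite (reidx (fun r => (o r && [exists t, lcusp r t] : nat))).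
rewrite (reidx (fun r => (~~ o r && [exists t, rcusp r t] : nat))).
rewrite -big_split /= -big_split /=; apply: eq_bigr => s _.
by case: (o s); rewrite ?andbT ?andbF.
Qed.

Lemma seg_inhab : exists s : Seg w, true.
Proof.
case/and3P: Hv => hs _ _.
have h0 := stS hs; have ok := evok hs.
have st0 : st w 0 = 0 by rewrite /st take0.
rewrite st0 in h0 ok.
case E: (ev w 0) => [i|i|i]; rewrite E in h0 ok => //.
have [s _] := @seg_ex 1 0 hs ltac:(by rewrite h0).
by exists s.
Qed.

Section Final.
Variables (X : finType) (sigma : {perm X}) (u d : X -> X) (m1 n1 : nat).
Hypotheses (hs : forall x, (sigma^-1)%g x = iter m1 sigma x)
  (hd : forall x, d x = iter m1 sigma (iter n1 u x))
  (hc : forall x, u (sigma x) = sigma (u x)).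

Definition FF m n x := iter m sigma (iter n u x).
Definition kea k := match k with KSig => 1 | KSigInv => m1 | KD => m1 | _ => 0 end.
Definition keb k := match k with KU => 1 | KD => n1 | _ => 0 end.

Lemma kfun_F k x : kfun sigma u d k x = FF (kea k) (keb k) x.
Proof. by case: k => //=; rewrite ?hs ?hd. Qed.

Lemma FD m n m' n' x : FF (m + m') (n + n') x = FF m n (FF m' n' x).
Proof. by rewrite /FF !iterD (@iter_comm _ u sigma hc). Qed.

Lemma sum_a : \sum_s kea (kind_of s) = Pos + m1 * (Neg + down_cusps o).
Proof.
rewrite -card_sig -card_siginv -card_d !cardS -big_split /= big_distrr /= -big_split /=.
apply: eq_bigr => s _.
by case: (kind_of s) => /=; rewrite ?muln0 ?muln1 ?addn0.
Qed.

Lemma sum_b : \sum_s keb (kind_of s) = up_cusps o + n1 * down_cusps o.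
Proof.
rewrite -card_u -card_d !cardS big_distrr /= -big_split /=; apply: eq_bigr => s _.
by case: (kind_of s) => /=; rewrite ?muln0 ?muln1 ?addn0.
Qed.

Lemma ColD_eq : connected w ->
  ColD o (fun x _ => sigma x) u d =
  #|[pred x | FF (Pos + m1 * (Neg + down_cusps o)) (up_cusps o + n1 * down_cusps o) x == x]|.
Proof.
move=> hconn; have [s0 _] := seg_inhab.
rewrite /ColD -sum_a -sum_b.
rewrite -(@cycle_count _ _ next FF (fun s => kea (kind_of s)) (fun s => keb (kind_of s)) s0
   next_inj (all_fconnect hconn s0) (fun x => erefl) FD).
apply: eq_card => c; rewrite !inE col_equiv; apply: eq_forallb => s.
by rewrite kfun_F.
Qed.
End Final.
End Struct.

From mathcomp Require Import ring.
Import GRing.Theory Num.Theory.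

Lemma writhe_eq (w : seq FEv) (o : {ffun Seg w -> bool}) :
  writhe o = ((Pos o)%:Z - (Neg o)%:Z)%R.
Proof.
rewrite /writhe /Pos /Neg (bigID (fun s => o s == over_dir o s)) /=.
rewrite (eq_bigr (fun _ => 1%R)); last by move=> s /andP[_ ->].
rewrite [X in (_ + X)%R](eq_bigr (fun _ => (-1)%R)); last by move=> s /andP[_ /negbTE ->].
rewrite !sumr_const mulNrn !natz; congr (Posz _ - Posz _)%R; exact: eq_card.
Qed.

Lemma key_tb (w : seq FEv) (o : {ffun Seg w -> bool}) :
  ((writhe o - (down_cusps o)%:Z)%:~R : rat)%R = (tbD o - Defs.rotD o)%R.
Proof.
rewrite /tbD /Defs.rotD !intrD !intrN natrD /=; by field.
Qed.

Lemma int_eqs (w1 w2 : seq FEv) (o1 : {ffun Seg w1 -> bool}) (o2 : {ffun Seg w2 -> bool}) :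
  tbD o1 = tbD o2 -> Defs.rotD o1 = Defs.rotD o2 ->
  (Pos o1 + Neg o2 + down_cusps o2 = Pos o2 + Neg o1 + down_cusps o1)%N /\
  (up_cusps o1 + down_cusps o2 = up_cusps o2 + down_cusps o1)%N.
Proof.
move=> Ht Hr.
have h1 : (writhe o1 - (down_cusps o1)%:Z)%R = (writhe o2 - (down_cusps o2)%:Z)%R.
  by apply: (@intr_inj rat); rewrite !key_tb Ht Hr.
have h2 : ((down_cusps o1)%:Z - (up_cusps o1)%:Z)%R = ((down_cusps o2)%:Z - (up_cusps o2)%:Z)%R.
  apply: (@intr_inj rat); move: Hr; rewrite /Defs.rotD => /(congr1 (fun x => x * 2)%R).
  by rewrite !mulfVK.
rewrite !writhe_eq in h1.
split; lia.
Qed.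

Lemma iter_inj_gen (X : Type) (f : X -> X) n : injective f -> injective (iter n f).
Proof. by move=> fi; elim: n => [|n IH] x y //= /fi /IH. Qed.

Lemma iter_per (X : Type) (f : X -> X) m (hm : forall x, iter m f x = x) a k x :
  iter (a + m * k) f x = iter a f x.
Proof.
elim: k => [|k IH]; first by rewrite muln0 addn0.
by rewrite mulnS addnCA iterD hm IH.
Qed.

Lemma iter_shift (X : Type) (f : X -> X) (fi : injective f) m
  (hm : forall x, iter m f x = x) a1 a2 c k1 k2 T :
  a1 + T = c + m * k1 -> a2 + T = c + m * k2 -> forall y, iter a1 f y = iter a2 f y.
Proof.
move=> e1 e2 y; apply: (@iter_inj_gen _ f T fi).
by rewrite -!iterD !(addnC T) e1 e2 !iter_per.
Qed.

Unset Implicit Arguments.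
Set Strict Implicit.

Theorem theorem4p2 (K1 K2 : LegKnot) :
  same_knot_type K1 K2 -> tb_of K1 = tb_of K2 -> rot_of K1 = rot_of K2 ->
  forall (X : finType) (sigma : {perm X}) (u d : X -> X),
    is_perm_GLrack sigma u d ->
    Col (fun x _ => sigma x) u d K1 = Col (fun x _ => sigma x) u d K2.
Proof.
move=> _ Ht Hr X sigma u d [[_ H2 H3 _] Hud].
have hc : forall x, u (sigma x) = sigma (u x) := fun x => (H3 x x).1.
have du : forall x, d (u (sigma x)) = x := fun x => (H2 x).2.
have e' : forall x, d (u x) = (sigma^-1)%g x.
  by move=> x; rewrite -{1}(permKV sigma x) du.
have uinj : injective u.
  by move=> x y exy; apply: (@perm_inj _ (sigma^-1)%g); rewrite -!e' exy.
pose U := perm uinj.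
pose m1 := #[sigma]%g.-1; pose n1 := #[U]%g.-1.
have hs : forall x, (sigma^-1)%g x = iter m1 sigma x.
  by move=> x; rewrite invg_expg permX.
have hU : forall x, (U^-1)%g x = iter n1 u x.
  by move=> x; rewrite invg_expg permX; apply: eq_iter => z; rewrite permE.
have hd : forall x, d x = iter m1 sigma (iter n1 u x).
  move=> x; rewrite -[d x](permK U) {2}/U permE Hud hU hs.
  by rewrite (@iter_comm _ u sigma hc).
rewrite /Col !(ColD_eq (lk_valid _) (lk_orient _) hs hd hc (lk_conn _)).
have [e1 e2] := int_eqs Ht Hr.
apply: eq_card => x; rewrite !inE /FF.
have hm1 : #[sigma]%g = m1.+1 by rewrite prednK ?order_gt0.
have hn1 : #[U]%g = n1.+1 by rewrite prednK ?order_gt0.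
have persig : forall x, iter m1.+1 sigma x = x.
  by move=> z; rewrite -hm1 -permX expg_order perm1.
have peru : forall x, iter n1.+1 u x = x.
  move=> z; rewrite -hn1 -(@eq_iter _ U u); first by rewrite -permX expg_order perm1.
  by move=> y; rewrite permE.
set P1 := Pos _; set P2 := Pos _; set N1 := Neg _; set N2 := Neg _.
set D1 := down_cusps (lk_o K1); set D2 := down_cusps (lk_o K2).
set U1 := up_cusps (lk_o K1); set U2 := up_cusps (lk_o K2).
rewrite (@iter_shift _ sigma (@perm_inj _ sigma) _ persig _ (P2 + m1 * (N2 + D2))
   (P2 + (N1 + D1)) (N1 + D1) (N2 + D2) ((N1 + D1) + (N2 + D2))); first last.
- by rewrite mulSn; lia.
- by rewrite mulSn; lia.
rewrite (@iter_shift _ u uinj _ peru _ (U2 + n1 * D2) (U2 + D1) D1 D2 (D1 + D2)) //.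
- by rewrite mulSn; lia.
by rewrite mulSn; lia.
Qed.
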